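(* There exists a universal constant $C$ such that for every integer $k\ge C$ and every 3-regular graph $G$, $\mathrm{Opt}(G)<\frac{332}{331}\,\mathrm{MaxCut}(G)$.
   Context: For a 3-regular graph $G$ on $n$ vertices with adjacency matrix $A$, let $Q_G=\frac12\big(I-\frac13A\big)$, $\mathrm{MaxCut}(G)=\max_{x\in\{\pm1/\sqrt n\}^n}x^TQ_Gx$, $p_G(x)=(x^TQ_Gx)\prod_{i=1}^n(nx_i^2)^k$ for $x\in\mathbb{R}^n$ (with $k$ a positive integer), and $\mathrm{Opt}(G)=\max_{x\in\mathbb{R}^n,\ \|x\|_2=1}p_G(x)$. *)

(* Defs.v *)
From HB Require Import structures.
From mathcomp Require Import all_boot all_order all_algebra.
From mathcomp Require Import all_classical all_reals.
Set Implicit Arguments. Unset Strict Implicit. Unset Printing Implicit Defensive.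
Import Order.TTheory GRing.Theory Num.Theory.
Local Open Scope ring_scope.
Local Open Scope classical_set_scope.

Definition simple_graph (n : nat) (e : rel 'I_n) : Prop :=
  (forall i j, e i j = e j i) /\ (forall i, ~~ e i i).

Definition three_regular (n : nat) (e : rel 'I_n) : Prop :=
  simple_graph e /\ forall i : 'I_n, #|[set j | e i j]| = 3%N.

Definition adjmx (R : realType) (n : nat) (e : rel 'I_n) : 'M[R]_n :=
  \matrix_(i, j) (e i j)%:R.

Definition QG (R : realType) (n : nat) (e : rel 'I_n) : 'M[R]_n :=
  2^-1 *: (1%:M - 3^-1 *: adjmx R e).

Definition qform (R : realType) (n : nat) (M : 'M[R]_n) (x : 'cV[R]_n) : R :=
  (x^T *m M *m x) 0 0.

Definition MaxCut (R : realType) (n : nat) (e : rel 'I_n) : R :=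
  sup [set qform (QG R e) x | x in
        [set x : 'cV[R]_n | forall i, x i 0 = (Num.sqrt (n%:R))^-1
                                   \/ x i 0 = - (Num.sqrt (n%:R))^-1]].

Definition pG (R : realType) (n : nat) (k : nat) (e : rel 'I_n) (x : 'cV[R]_n) : R :=
  qform (QG R e) x * \prod_(i < n) (n%:R * x i 0 ^+ 2) ^+ k.

(* Opt(G) = max over the unit sphere (a maximum, attained by compactness). *)
Definition Opt (R : realType) (n : nat) (k : nat) (e : rel 'I_n) : R :=
  sup [set pG k e x | x in [set x : 'cV[R]_n | \sum_(i < n) x i 0 ^+ 2 = 1]].

(* Main.v *)
Require Import Defs.
From HB Require Import structures.
From mathcomp Require Import all_boot all_order all_algebra.
From mathcomp Require Import all_classical all_reals.
From mathcomp Require Import sequences exp.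
From mathcomp Require Import ring lra.
Import Order.TTheory GRing.Theory Num.Theory.
Local Open Scope ring_scope.

Lemma amgm (R : realType) (c u v : R) : 0 < c -> `|u * v| <= (c * u ^+ 2 + c^-1 * v ^+ 2) / 2.
Proof.
move=> c0.
have d0 : 0 < c^-1 by rewrite invr_gt0.
have cd : c * c^-1 = 1 by rewrite mulfV // gt_eqF.
rewrite normrM.
have -> : u ^+ 2 = `|u| ^+ 2 by rewrite real_normK // num_real.
have -> : v ^+ 2 = `|v| ^+ 2 by rewrite real_normK // num_real.
have U := normr_ge0 u; have V := normr_ge0 v.
set d := c^-1 in d0 cd *; set U' := `|u| in U *; set V' := `|v| in V *.
have : 0 <= d * (c * U' - V') ^+ 2 by rewrite mulr_ge0 // ?sqr_ge0 // ltW.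
have -> : d * (c * U' - V') ^+ 2 = (c * d) * c * U' ^+ 2 - 2 * (c * d) * U' * V' + d * V' ^+ 2 by ring.
rewrite cd. lra.
Qed.

Section S.
Variable R : realType.
Variable n : nat.
Variable e : rel 'I_n.

Definition a (i j : 'I_n) : R := (e i j)%:R.
Definition sq (u : 'I_n -> R) := \sum_i u i ^+ 2.
Definition Ae (u v : 'I_n -> R) := \sum_i \sum_j a i j * u i * v j.
Definition qf (u : 'I_n -> R) := 2^-1 * sq u - 6^-1 * Ae u u.


Lemma qform_QG (x : 'cV[R]_n) : qform (QG R e) x = qf (fun i => x i 0).
Proof.
rewrite /qform /QG /qf /sq /Ae.
rewrite -scalemxAr -scalemxAl mulmxBr mulmxBl mulmx1 -scalemxAr -scalemxAl.
rewrite !mxE mulrBr mulrA -invfM -natrM /=; congr (_ - _).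
  by congr (_ * _); apply: eq_bigr => i _; rewrite !mxE expr2.
congr (_ * _); rewrite exchange_big /=; apply: eq_bigr => j _.
rewrite !mxE big_distrl /=; apply: eq_bigr => i _.
by rewrite !mxE /a [x i 0 * _]mulrC.
Qed.

Hypothesis H3 : three_regular e.

Lemma a_ge0 i j : 0 <= a i j. Proof. by rewrite /a ler0n. Qed.

Lemma rowsum i : \sum_j a i j = 3.
Proof.
rewrite /a -natr_sum.
have -> : (\sum_j (e i j : nat))%N = (\sum_(j | e i j) 1)%N.
  by rewrite [RHS]big_mkcond /=; apply: eq_bigr => j _; case: (e i j).
rewrite sum1dep_card -(H3.2 i); congr (_%:R); apply: eq_card => j.
rewrite inE; apply/idP/idP; rewrite in_setE //.

Qed.

Lemma colsum j : \sum_i a i j = 3.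
Proof.
rewrite -(rowsum j); apply: eq_bigr => i _; by rewrite /a H3.1.1.
Qed.

Lemma dot_bound (c : R) u v : 0 < c ->
  `|\sum_i u i * v i| <= (c * sq u + c^-1 * sq v) / 2.
Proof.
move=> c0; apply: (le_trans (ler_norm_sum _ _ _)).
rewrite /sq !mulr_sumr -big_split /= big_distrl /=.
by apply: ler_sum => i _; apply: amgm.
Qed.

Lemma Ae_bound (c : R) u v : 0 < c ->
  `|Ae u v| <= 3 * (c * sq u + c^-1 * sq v) / 2.
Proof.
move=> c0; rewrite /Ae; apply: (le_trans (ler_norm_sum _ _ _)).
apply: (@le_trans _ _ (\sum_i \sum_j a i j * ((c * u i ^+ 2 + c^-1 * v j ^+ 2) / 2))).
  apply: ler_sum => i _; apply: (le_trans (ler_norm_sum _ _ _)).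
  apply: ler_sum => j _; rewrite -mulrA normrM ger0_norm ?a_ge0 //.
  by apply: ler_wpM2l; [apply: a_ge0 | apply: amgm].
have E : forall i j, a i j * ((c * u i ^+ 2 + c^-1 * v j ^+ 2) / 2) =
   (c/2) * (u i ^+ 2 * a i j) + (c^-1/2) * (v j ^+ 2 * a i j) by move=> i j; ring.
under eq_bigr => i _ do under eq_bigr => j _ do rewrite E.
under eq_bigr => i _ do rewrite big_split /=.
rewrite big_split /=.
have S1 : \sum_i \sum_j c / 2 * (u i ^+ 2 * a i j) = c / 2 * sq u * 3.
  rewrite /sq mulr_sumr big_distrl /=; apply: eq_bigr => i _.
  by rewrite -mulr_sumr -mulr_sumr rowsum mulrA.
have S2 : \sum_i \sum_j c^-1 / 2 * (v j ^+ 2 * a i j) = c^-1 / 2 * sq v * 3.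
  rewrite exchange_big /sq mulr_sumr big_distrl /=; apply: eq_bigr => j _.
  by rewrite -mulr_sumr -mulr_sumr colsum mulrA.
rewrite S1 S2; rewrite le_eqVlt; apply/orP; left; apply/eqP; ring.
Qed.

Lemma Ae_self u : `|Ae u u| <= 3 * sq u.
Proof.
have h := Ae_bound 1 u u (@ltr01 R); rewrite invr1 !mul1r in h.
apply: (le_trans h); rewrite le_eqVlt; apply/orP; left; apply/eqP; by field.
Qed.

Lemma sq_ge0 u : 0 <= sq u.
Proof. by apply: sumr_ge0 => i _; apply: sqr_ge0. Qed.

Lemma qf_ge0 u : 0 <= qf u.
Proof.
rewrite /qf; have := Ae_self u; rewrite ler_norml => /andP [_ h]. lra.
Qed.

Lemma qf_le u : qf u <= sq u.
Proof.
rewrite /qf; have := Ae_self u; rewrite ler_norml => /andP [h _]. have := sq_ge0 u. lra.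
Qed.

Lemma qf_split u w : qf (fun i => u i + w i) =
  qf u + qf w + \sum_i u i * w i - 6^-1 * (Ae u w + Ae w u).
Proof.
rewrite /qf /sq /Ae.
have E1 : forall i, (u i + w i) ^+ 2 = u i ^+ 2 + w i ^+ 2 + 2 * (u i * w i) by move=> i; ring.
have E2 : forall i j, a i j * (u i + w i) * (u j + w j) =
  a i j * u i * u j + a i j * w i * w j + (a i j * u i * w j + a i j * w i * u j) by move=> i j; ring.
have -> : \sum_i \sum_j a i j * (u i + w i) * (u j + w j) =
  \sum_i \sum_j a i j * u i * u j + \sum_i \sum_j a i j * w i * w j +
   (\sum_i \sum_j a i j * u i * w j + \sum_i \sum_j a i j * w i * u j).
  rewrite -!big_split /=; apply: eq_bigr => i _; rewrite -!big_split /=.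
  by apply: eq_bigr => j _; rewrite E2.
under eq_bigr => i _ do rewrite E1.
rewrite !big_split /= -mulr_sumr.
by field.
Qed.

Hypothesis hn : (0 < n)%N.

Definition r : R := (Num.sqrt (n%:R : R))^-1.
Lemma sqrtn_gt0 : 0 < Num.sqrt (n%:R : R).
Proof. by rewrite sqrtr_gt0 ltr0n. Qed.
Lemma r_gt0 : 0 < r.
Proof. by rewrite /r invr_gt0 sqrtn_gt0. Qed.
Lemma nr2 : n%:R * r ^+ 2 = 1.
Proof. by rewrite /r exprVn sqr_sqrtr ?ler0n // mulfV // pnatr_eq0 -lt0n. Qed.
Lemma sr : Num.sqrt (n%:R : R) * r = 1.
Proof. by rewrite /r mulfV // gt_eqF // sqrtn_gt0. Qed.

Definition sg (b : bool) : R := if b then 1 else -1.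
Lemma sg2 b : sg b ^+ 2 = 1. Proof. by case: b; rewrite /sg ?expr1n ?sqrrN ?expr1n. Qed.

Definition zf (s : 'I_n -> bool) i := sg (s i) * r.
Lemma sq_zf s : sq (zf s) = 1.
Proof.
rewrite /sq /zf; under eq_bigr => i _ do rewrite exprMn sg2 mul1r.
by rewrite sumr_const card_ord -mulr_natl nr2.
Qed.

Definition flip (i : 'I_n) (s : {ffun 'I_n -> bool}) : {ffun 'I_n -> bool} :=
  [ffun l => if l == i then ~~ s l else s l].
Lemma flipK i : involutive (flip i).
Proof. move=> s; apply/ffunP => l; rewrite !ffunE; case: (l == i) => //; by rewrite negbK. Qed.

Lemma flip_sum (i j : 'I_n) : i != j ->
  \sum_(s : {ffun 'I_n -> bool}) sg (s i) * sg (s j) = 0.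
Proof.
move=> ij.
have ji : (j == i) = false by apply/negbTE; rewrite eq_sym.
set S := (X in X = 0).
have : S = - S.
  rewrite /S {1}(reindex_inj (inv_inj (flipK i))) /= -sumrN.
  apply: eq_bigr => s _; rewrite !ffunE eqxx ji.
  by case: (s i); case: (s j); rewrite /sg /= ?mul1r ?mulN1r ?opprK ?mulr1.
move=> h; lra.
Qed.

Definition zc (s : 'I_n -> bool) : 'cV[R]_n := \col_i zf s i.

Definition cube := [set x : 'cV[R]_n | forall i, x i 0 = (Num.sqrt (n%:R))^-1
                                   \/ x i 0 = - (Num.sqrt (n%:R))^-1]%classic.

Lemma zc_cube s : cube (zc s).
Proof. by move=> i; rewrite /zc mxE /zf /sg /r; case: (s i); [left|right]; rewrite ?mul1r ?mulN1r. Qed.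

Lemma cube_sq x : cube x -> sq (fun i => x i 0) = 1.
Proof.
move=> hx; rewrite /sq.
have E : forall i, x i 0 ^+ 2 = r ^+ 2 by move=> i; case: (hx i) => ->; rewrite ?sqrrN.
under eq_bigr => i _ do rewrite E.
by rewrite sumr_const card_ord -mulr_natl nr2.
Qed.

Lemma Ae_avg : \sum_(s : {ffun 'I_n -> bool}) Ae (zf s) (zf s) = 0.
Proof.
rewrite /Ae exchange_big /=; apply: big1 => i _.
rewrite exchange_big /=; apply: big1 => j _.
have E : forall s : {ffun 'I_n -> bool}, a i j * zf s i * zf s j = (a i j * r ^+ 2) * (sg (s i) * sg (s j)).
  by move=> s; rewrite /zf; ring.
under eq_bigr => s _ do rewrite E.
rewrite -mulr_sumr.
case: (eqVneq i j) => [<-|ij]; last by rewrite flip_sum // mulr0.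
by rewrite /a (negbTE (H3.1.2 i)) mul0r mul0r.
Qed.

Lemma M_prop : has_sup [set qform (QG R e) x | x in cube]%classic.
Proof.
split.
  exists (qform (QG R e) (zc (fun _ => true))); exists (zc (fun _ => true)) => //; exact: zc_cube.
exists 1 => y [x hx <-]; rewrite qform_QG.
by apply: (le_trans (qf_le _)); rewrite cube_sq.
Qed.

Lemma M_ub x : cube x -> qf (fun i => x i 0) <= MaxCut R e.
Proof.
move=> hx; rewrite -qform_QG; apply: (sup_upper_bound M_prop); by exists x.
Qed.

Lemma M_half : 2^-1 <= MaxCut R e.
Proof.
set M := MaxCut R e.
have h : \sum_(s : {ffun 'I_n -> bool}) (qf (zf s) - M) <= 0.
  apply: sumr_le0 => s _; rewrite subr_le0.
  have := @M_ub _ (zc_cube s); congr (_ <= _); rewrite /qf /sq /Ae.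
  by congr (_ * _ - _ * _); [apply: eq_bigr => i _ | apply: eq_bigr => i _; apply: eq_bigr => j _]; rewrite /zc !mxE.
have E : forall s : {ffun 'I_n -> bool}, qf (zf s) - M = (2^-1 - M) - 6^-1 * Ae (zf s) (zf s).
  by move=> s; rewrite /qf sq_zf mulr1; ring.
rewrite (eq_bigr (fun s : {ffun 'I_n -> bool} => (2^-1 - M) - 6^-1 * Ae (zf s) (zf s))) in h; last by move=> s _; apply: E.
rewrite sumrB -mulr_sumr Ae_avg mulr0 subr0 sumr_const pmulrn_lle0 in h.
  by rewrite -subr_le0.
by apply/card_gt0P; exists [ffun _ => true].
Qed.

Lemma M_ub' (s : 'I_n -> bool) : qf (zf s) <= MaxCut R e.
Proof.
have := @M_ub _ (zc_cube s); congr (_ <= _); rewrite /qf /sq /Ae.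
by congr (_ * _ - _ * _); [apply: eq_bigr => i _ | apply: eq_bigr => i _; apply: eq_bigr => j _]; rewrite /zc !mxE.
Qed.

Lemma pow_le (x y : R) k : 0 <= x -> x <= y -> x ^+ k <= y ^+ k.
Proof. move=> hx hxy; apply: lerXn2r => //; rewrite nnegrE //; exact: le_trans hxy. Qed.

Lemma factor_le (f : R) k : 0 <= f -> (f ^+ 2) ^+ k <= expR (k%:R * (2 * (f - 1))).
Proof.
move=> f0.
have h1 : f <= expR (f - 1) by have := expR_ge1Dx (f - 1); rewrite addrC subrK.
rewrite expRM_natl mulrC expRM_natr.
apply: pow_le; first by apply: exprn_ge0.
by apply: pow_le.
Qed.

Lemma sqrtn_nr : Num.sqrt (n%:R : R) = n%:R * r.
Proof.
have h1 := sr; have h2 := nr2.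
transitivity (Num.sqrt (n%:R : R) * (n%:R * r ^+ 2)); first by rewrite h2 mulr1.
have -> : Num.sqrt (n%:R : R) * (n%:R * r ^+ 2) = n%:R * r * (Num.sqrt (n%:R : R) * r) by ring.
by rewrite h1 mulr1.
Qed.

Section Point.
Variable x : 'cV[R]_n.
Hypothesis hx : sq (fun i => x i 0) = 1.
Let xf i := x i 0.
Let s i := (0 <= x i 0).
Let z := zf s.
Let w i := xf i - z i.
Let t := sq w.

Lemma t_eq : t = 2 - 2 * r * \sum_i `|xf i|.
Proof.
have E : forall i, w i ^+ 2 = xf i ^+ 2 - 2 * r * `|xf i| + r ^+ 2.
  move=> i; rewrite /w /z /zf /s /xf /sg; case: ifP => h.
    by rewrite ger0_norm //; ring.
  by rewrite ltr0_norm ?ltNge ?h //; ring.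
rewrite /t /sq; under eq_bigr => i _ do rewrite E.
rewrite !big_split /= sumr_const card_ord sumrN -[r ^+ 2 *+ n]mulr_natr [r ^+ 2 * _]mulrC nr2 -mulr_sumr.
have -> : \sum_i xf i ^+ 2 = 1 by exact: hx.
ring.
Qed.

Lemma P_le (k : nat) : \prod_i (n%:R * x i 0 ^+ 2) ^+ k <= expR (- (k%:R * n%:R * t)).
Proof.
set f := fun i => Num.sqrt (n%:R : R) * `|xf i|.
have Ef : forall i, n%:R * x i 0 ^+ 2 = f i ^+ 2.
  by move=> i; rewrite /f exprMn sqr_sqrtr ?ler0n // real_normK // num_real.
rewrite (eq_bigr (fun i => (f i ^+ 2) ^+ k)); last by move=> i _; rewrite Ef.
apply: (@le_trans _ _ (\prod_i expR (k%:R * (2 * (f i - 1))))).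
  apply: ler_prod => i _; rewrite exprn_ge0 ?sqr_ge0 //=.
  by apply: factor_le; rewrite /f mulr_ge0 ?sqrtr_ge0.
rewrite -expR_sum -mulr_sumr -mulr_sumr sumrB sumr_const card_ord.
rewrite /f -mulr_sumr sqrtn_nr t_eq.
rewrite le_eqVlt; apply/orP; left; apply/eqP; congr (expR _).
rewrite -mulr_natr; ring.
Qed.

Definition eps : R := (4096%:R)^-1.
Lemma eps_gt0 : 0 < eps. Proof. by rewrite /eps invr_gt0 ltr0n. Qed.

Lemma pG_le (k : nat) : (4096 ^ 2 <= k)%N ->
  pG k e x <= MaxCut R e + 2 * eps + eps ^+ 2.
Proof.
move=> hk.
set M := MaxCut R e.
have hM : 2^-1 <= M := M_half.
set P := \prod_i (n%:R * x i 0 ^+ 2) ^+ k.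
have hP0 : 0 <= P by apply: prodr_ge0 => i _; apply: exprn_ge0; rewrite mulr_ge0 ?ler0n ?sqr_ge0.
have hPe := P_le k; rewrite -/P in hPe.
have ht0 : 0 <= t := sq_ge0 w.
have hy0 : 0 <= k%:R * n%:R * t by rewrite !mulr_ge0 ?ler0n.
have hP1 : P <= 1.
  apply: (le_trans hPe); rewrite expR_le1 oppr_le0 //.
have -> : pG k e x = qf (fun i => x i 0) * P by rewrite /pG qform_QG.
have hq0 := qf_ge0 (fun i => x i 0).
have hq1 : qf (fun i => x i 0) <= 1 by rewrite -hx; apply: qf_le.
have e0 := eps_gt0.
case: (lerP t (eps ^+ 2)) => ht.
  apply: (le_trans (ler_piMr hq0 hP1)).
  have -> : (fun i => x i 0) = (fun i => z i + w i) by apply/funext => i; rewrite /w /xf addrC subrK.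
  rewrite qf_split.
  have hz : sq z = 1 := sq_zf s.
  have hd := dot_bound eps z w e0; rewrite hz -/t mulr1 in hd.
  have ha1 := Ae_bound eps z w e0; rewrite hz -/t mulr1 in ha1.
  have eps_inv_gt0 : 0 < eps^-1 by rewrite invr_gt0.
  have ha2 := Ae_bound eps^-1 w z (eps_inv_gt0); rewrite hz -/t invrK mulr1 in ha2.
  have hqz : qf z <= M := M_ub' s.
  have hqw : qf w <= t := qf_le w.
  move: hd ha1 ha2; rewrite !ler_norml => /andP [_ hd] /andP [ha1 _] /andP [ha2 _].
  have hu : eps^-1 * t <= eps.
    have : eps^-1 * t <= eps^-1 * eps ^+ 2 by rewrite ler_wpM2l // ?invr_ge0 ltW.
    by rewrite expr2 mulrA mulVf ?mul1r // gt_eqF.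
  lra.
have hk' : (4096%:R : R) ^+ 2 <= k%:R by rewrite -natrX ler_nat.
have he : eps ^+ 2 * (4096%:R : R) ^+ 2 = 1 by rewrite /eps -exprMn mulVf ?expr1n // pnatr_eq0.
have hn1 : 1 <= (n%:R : R) by rewrite ler1n.
have hkt : 1 <= k%:R * t.
  have h1 : 4096%:R ^+ 2 * eps ^+ 2 <= k%:R * t.
    apply: ler_pM; [by rewrite exprn_ge0 // ler0n | by rewrite exprn_ge0 // ltW | exact: hk' | exact: ltW].
  by rewrite mulrC he in h1.
have hy : 1 <= k%:R * n%:R * t.
  have : k%:R * t <= k%:R * n%:R * t.
    by rewrite mulrAC ler_peMr // mulr_ge0 // ler0n.
  move=> h; exact: le_trans hkt h.
set y := k%:R * n%:R * t in hPe hy hy0 *.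
have hE1 : 1 + y <= expR y := expR_ge1Dx y.
have hE2 : expR (- y) * expR y = 1 by rewrite expRN mulVf // gt_eqF // expR_gt0.
have hE3 := expR_gt0 (- y).
have hP2 : P <= 2^-1 by nra.
have : qf (fun i => x i 0) * P <= P by rewrite ler_piMl.
lra.
Qed.
End Point.
End S.

Theorem mainTheorem19 :
  exists C : nat, forall (R : realType) (k : nat), (C <= k)%N ->
    forall (n : nat) (e : rel 'I_n), (0 < n)%N -> three_regular e ->
      Opt R k e < (332%:R / 331%:R) * MaxCut R e.
Proof.
exists (4096 ^ 2)%N => R k hk n e hn H3.
set M := MaxCut R e.
have hM : 2^-1 <= M := M_half R n e H3 hn.
have hO : Opt R k e <= M + 2 * eps R + eps R ^+ 2.
  apply: ge_sup.
    exists (pG k e (zc R n (fun _ => true))); exists (zc R n (fun _ => true)) => //.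
    exact: (@cube_sq R n hn _ (zc_cube R n _)).
  move=> y [x hx <-]; exact: (@pG_le R n e H3 hn x hx k hk).
have e1 : eps R * 4096%:R = 1 by rewrite /eps mulVf // pnatr_eq0.
have e0 := eps_gt0 R.
have e2 : eps R ^+ 2 <= eps R.
  have e3 : eps R <= 1 by nra.
  rewrite expr2; nra.
apply: (le_lt_trans hO).
lra.
Qed.
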